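(* Consider a two-player zero-sum matrix game with action sets $\mathcal{A}=\{1,\dots,m\}$ and $\mathcal{B}=\{1,\dots,n\}$, a known feature map $\phi:\mathcal{A}\times\mathcal{B}\to\mathbb{R}^d$ with $\|\phi(a,b)\|_2\le L$ for all $(a,b)$, and an unknown parameter $\theta^*\in\mathbb{R}^d$ with $\|\theta^*\|_2=1$, so that the payoff matrix is $Q(a,b)=\langle\phi(a,b),\theta^*\rangle$. Let $\tau^*>0$ and let $(\mu^*,\nu^* )$ be the quantal response equilibrium (QRE) of this game at temperature $\tau^*$. Write $X^*=X(\mu^*,\nu^* )$ and $y^*=y(\mu^*,\nu^* )$. Then the pair $(\theta^*,\tau^* )$ is uniquely identifiable from $(\mu^*,\nu^* )$, i.e. it is the unique pair $(\theta,\tau)\in\mathbb{R}^d\times(0,\infty)$ with $\|\theta\|_2=1$ and $X^*\theta=\tau y^*$, if and only if both of the following hold: (1) (Rank condition) $\operatorname{rank}(X^* )=d$; (2) (Non-uniformity condition) $y^*\neq 0$.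
   Context: For $\tau>0$ and a payoff matrix $Q\in\mathbb{R}^{m\times n}$, the entropy-regularized game is $\max_{\mu\in\Delta(\mathcal{A})}\min_{\nu\in\Delta(\mathcal{B})}\{\mu^\top Q\nu+\tau\mathcal{H}(\mu)-\tau\mathcal{H}(\nu)\}$ with Shannon entropy $\mathcal{H}(\pi)=-\sum_i\pi_i\log\pi_i$; its unique solution $(\mu^*,\nu^* )$ is the QRE, characterized by $\mu^*(a)\propto\exp(Q(a,\cdot)\nu^*/\tau)$ and $\nu^*(b)\propto\exp(-Q(\cdot,b)^\top\mu^*/\tau)$. For full-support distributions $\mu\in\Delta(\mathcal{A}),\nu\in\Delta(\mathcal{B})$ define $A(\nu)\in\mathbb{R}^{(m-1)\times d}$ with row $a-1$ (for $a=2,\dots,m$) equal to $\sum_{b'\in\mathcal{B}}\nu(b')(\phi(a,b')-\phi(1,b'))^\top$; $B(\mu)\in\mathbb{R}^{(n-1)\times d}$ with row $b-1$ (for $b=2,\dots,n$) equal to $\sum_{a'\in\mathcal{A}}\mu(a')(\phi(a',1)-\phi(a',b))^\top$; $c(\mu)\in\mathbb{R}^{m-1}$ with $c(\mu)_{a-1}=\log(\mu(a)/\mu(1))$; $d(\nu)\in\mathbb{R}^{n-1}$ with $d(\nu)_{b-1}=\log(\nu(b)/\nu(1))$. Set $X(\mu,\nu)=[A(\nu)^\top,B(\mu)^\top]^\top\in\mathbb{R}^{(m+n-2)\times d}$ and $y(\mu,\nu)=[c(\mu)^\top,d(\nu)^\top]^\top\in\mathbb{R}^{m+n-2}$. The QRE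 satisfies $X(\mu^*,\nu^* )\theta^*=\tau^*y(\mu^*,\nu^* )$. *)

(* Defs.v *)
From HB Require Import structures.
From mathcomp Require Import all_boot all_order all_algebra.
From mathcomp Require Import reals exp.
Set Implicit Arguments. Unset Strict Implicit. Unset Printing Implicit Defensive.
Import Order.TTheory GRing.Theory Num.Theory.
Local Open Scope ring_scope.

(* Actions: A = 'I_m (action a+1 of the paper = ordinal a), B = 'I_n.
   Rows of A(nu) are indexed by i : 'I_m.-1, standing for action i+2 of the
   paper, i.e. ordinal i.+1; "action 1" of the paper is ordinal 0. *)

Lemma succ_ord_lt (m : nat) (i : 'I_m.-1) : (i.+1 < m)%N.
Proof. by case: m i => [|m] [i hi]. Qed.

Lemma zero_ord_lt (m : nat) (i : 'I_m.-1) : (0 < m)%N.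
Proof. by case: m i => [|m] [i hi]. Qed.

Definition succ_act (m : nat) (i : 'I_m.-1) : 'I_m := Ordinal (succ_ord_lt i).
(* the reference action "1" (paper indexing) = ordinal 0 (exists since a row exists) *)
Definition first_act (m : nat) (i : 'I_m.-1) : 'I_m := Ordinal (zero_ord_lt i).

Section Defs.
Variable R : realType.

Definition norm2 (d : nat) (v : 'cV[R]_d) : R := Num.sqrt (\sum_(k < d) v k 0 ^+ 2).

Definition in_simplex (k : nat) (p : 'I_k -> R) : Prop :=
  (forall i, 0 <= p i) /\ \sum_(i < k) p i = 1.

Definition entropy (k : nat) (p : 'I_k -> R) : R := - \sum_(i < k) p i * ln (p i).

Definition payoff (m n d : nat) (phi : 'I_m -> 'I_n -> 'cV[R]_d) (theta : 'cV[R]_d)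
  (a : 'I_m) (b : 'I_n) : R := \sum_(k < d) phi a b k 0 * theta k 0.

Definition reg_obj (m n : nat) (Q : 'I_m -> 'I_n -> R) (tau : R)
  (mu : 'I_m -> R) (nu : 'I_n -> R) : R :=
  \sum_(a < m) \sum_(b < n) mu a * Q a b * nu b + tau * entropy mu - tau * entropy nu.

Definition is_QRE (m n : nat) (Q : 'I_m -> 'I_n -> R) (tau : R)
  (mu : 'I_m -> R) (nu : 'I_n -> R) : Prop :=
  [/\ in_simplex mu, in_simplex nu,
      (forall mu', in_simplex mu' -> reg_obj Q tau mu' nu <= reg_obj Q tau mu nu) &
      (forall nu', in_simplex nu' -> reg_obj Q tau mu nu <= reg_obj Q tau mu nu')].

Definition Amat (m n d : nat) (phi : 'I_m -> 'I_n -> 'cV[R]_d) (nu : 'I_n -> R)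
  : 'M[R]_(m.-1, d) :=
  \matrix_(i < m.-1, k < d)
    \sum_(b < n) nu b * (phi (succ_act i) b k 0 - phi (first_act i) b k 0).

Definition Bmat (m n d : nat) (phi : 'I_m -> 'I_n -> 'cV[R]_d) (mu : 'I_m -> R)
  : 'M[R]_(n.-1, d) :=
  \matrix_(j < n.-1, k < d)
    \sum_(a < m) mu a * (phi a (first_act j) k 0 - phi a (succ_act j) k 0).

Definition cvec (m : nat) (mu : 'I_m -> R) : 'cV[R]_(m.-1) :=
  \col_(i < m.-1) ln (mu (succ_act i) / mu (first_act i)).

Definition Xmat (m n d : nat) (phi : 'I_m -> 'I_n -> 'cV[R]_d)
  (mu : 'I_m -> R) (nu : 'I_n -> R) : 'M[R]_(m.-1 + n.-1, d) :=
  col_mx (Amat phi nu) (Bmat phi mu).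

Definition yvec (m n : nat) (mu : 'I_m -> R) (nu : 'I_n -> R) : 'cV[R]_(m.-1 + n.-1) :=
  col_mx (cvec mu) (cvec nu).

End Defs.

(* Main.v *)
Require Import Defs.
From HB Require Import structures.
From mathcomp Require Import all_boot all_order all_algebra.
From mathcomp Require Import reals exp sequences.
From mathcomp Require Import ring lra.
Import Order.TTheory GRing.Theory Num.Theory.
Local Open Scope ring_scope.

Lemma gibbs (R : realType) (k : nat) (g : 'I_k -> R) (tau : R) (p : 'I_k -> R) :
  0 < tau -> in_simplex p ->
  (forall p', in_simplex p' ->
     \sum_a p' a * g a + tau * entropy p' <= \sum_a p a * g a + tau * entropy p) ->
  forall a, p a = expR (g a / tau) / \sum_b expR (g b / tau).
Proof.
move=> tau0 [p0 p1] popt.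
have Z0 : 0 < \sum_b expR (g b / tau).
  case: k g p p0 p1 popt => [|k] g p p0 p1 popt.
    by move: p1; rewrite big_ord0 => /eqP; rewrite eq_sym oner_eq0.
  rewrite big_ord_recl; apply: ltr_pwDl; first exact: expR_gt0.
  by apply: sumr_ge0 => i _; exact: expR_ge0.
set e := fun a => expR (g a / tau).
set Z := \sum_b expR (g b / tau).
set q := fun a => e a / Z.
have q0 : forall a, 0 < q a by move=> a; rewrite /q divr_gt0 // expR_gt0.
have q1 : \sum_a q a = 1.
  by rewrite /q -mulr_suml divff // gt_eqF.
have lnq : forall a, ln (q a) = g a / tau - ln Z.
  by move=> a; rewrite /q ln_div ?posrE ?expR_gt0 // /e expRK.
have Fq : \sum_a q a * g a + tau * entropy q = tau * ln Z.
  rewrite /entropy.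
  under [\sum_(i < k) q i * ln (q i)]eq_bigr => a _ do rewrite lnq mulrBr.
  rewrite sumrB -mulr_suml q1 mul1r.
  have -> : \sum_a q a * (g a / tau) = (\sum_a q a * g a) / tau.
    by rewrite mulr_suml; apply: eq_bigr => a _; rewrite mulrA.
  by field; rewrite gt_eqF.
have Fp := popt q (conj (fun a => ltW (q0 a)) q1).
rewrite Fq in Fp.
pose t a := p a * (ln (q a) - ln (p a)) - (q a - p a).
have tle : forall a, t a <= 0 /\ (t a = 0 -> p a = q a).
  move=> a; rewrite /t.
  have [pa0|pa0] := eqVneq (p a) 0.
    rewrite pa0 mul0r sub0r subr0; split; first by rewrite oppr_le0 ltW.
    by move/eqP; rewrite oppr_eq0 gt_eqF.
  have ppos : 0 < p a by rewrite lt_def pa0 p0.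
  have -> : p a * (ln (q a) - ln (p a)) - (q a - p a)
      = p a * (1 + ln (q a / p a) - expR (ln (q a / p a))).
    rewrite lnK; last by rewrite posrE divr_gt0.
    rewrite ln_div ?posrE //.
    by field; rewrite gt_eqF.
  have [l0|l0] := eqVneq (ln (q a / p a)) 0.
    rewrite l0 expR0 addr0 subrr mulr0; split => // _.
    move: l0; rewrite ln_div ?posrE // => /eqP; rewrite subr_eq0 => /eqP.
    by move=> h; apply: ln_inj; rewrite ?posrE // h.
  have := expR_gt1Dx l0; rewrite -subr_lt0 => h.
  split; first by rewrite pmulr_rle0 // ltW.
  by move/eqP; rewrite mulf_eq0 gt_eqF //= lt_eqF.
have sumt : \sum_a t a = (\sum_a p a * g a + tau * entropy p) / tau - ln Z.
  rewrite /t sumrB sumrB p1 q1 subrr subr0 /entropy.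
  under eq_bigr => a _ do rewrite mulrBr lnq mulrBr.
  rewrite sumrB sumrB -mulr_suml p1 mul1r.
  have -> : \sum_a p a * (g a / tau) = (\sum_a p a * g a) / tau.
    by rewrite mulr_suml; apply: eq_bigr => a _; rewrite mulrA.
  by field; rewrite gt_eqF.
have sumt0 : 0 <= \sum_a t a.
  rewrite sumt subr_ge0 ler_pdivlMr // mulrC //.
have all0 : forall a, - t a = 0.
  move=> a0; apply: (psumr_eq0P (P := predT) (F := fun a => - t a)) => //.
    by move=> a _; rewrite oppr_ge0; case: (tle a).
  apply/eqP; rewrite eq_le sumr_ge0 ?andbT; last first.
    by move=> a _; rewrite oppr_ge0; case: (tle a).
  by rewrite sumrN oppr_le0.
move=> a; case: (tle a) => _ -> //.
by apply/eqP; rewrite -oppr_eq0 all0.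
Qed.

Lemma gibbs_ln (R : realType) (k : nat) (g : 'I_k -> R) (tau : R) (p : 'I_k -> R) :
  0 < tau -> in_simplex p ->
  (forall p', in_simplex p' ->
     \sum_a p' a * g a + tau * entropy p' <= \sum_a p a * g a + tau * entropy p) ->
  forall i j, tau * ln (p i / p j) = g i - g j.
Proof.
move=> tau0 ps popt i j.
have Z0 : 0 < \sum_b expR (g b / tau).
  rewrite (bigD1 i) //=; apply: ltr_pwDl; first exact: expR_gt0.
  by apply: sumr_ge0 => b _; exact: expR_ge0.
rewrite !(@gibbs R k g tau p tau0 ps popt) ln_div ?posrE ?divr_gt0 ?expR_gt0 //.
rewrite !ln_div ?posrE ?expR_gt0 // !expRK.
by field; rewrite gt_eqF.
Qed.

Lemma norm2_1 (R : realType) (d : nat) (v : 'cV[R]_d) :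
  norm2 v = 1 <-> \sum_(k < d) v k 0 ^+ 2 = 1.
Proof.
rewrite /norm2; split => [h|->]; last exact: sqrtr1.
have s0 : 0 <= \sum_(k < d) v k 0 ^+ 2 by apply: sumr_ge0 => k _; exact: sqr_ge0.
by rewrite -(sqr_sqrtr s0) h expr1n.
Qed.

Lemma sumsq_comb (R : realType) (d : nat) (a b : 'I_d -> R) (c : R) :
  \sum_(k < d) (a k + c * b k) ^+ 2 =
  \sum_(k < d) a k ^+ 2 + 2 * c * \sum_(k < d) a k * b k + c ^+ 2 * \sum_(k < d) b k ^+ 2.
Proof.
rewrite !mulr_sumr -!big_split; apply: eq_bigr => k _ /=; ring.
Qed.

Lemma qre_eq (R : realType) (m n d : nat) (phi : 'I_m -> 'I_n -> 'cV[R]_d)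
  (theta : 'cV[R]_d) (tau : R) (mu : 'I_m -> R) (nu : 'I_n -> R) :
  0 < tau -> is_QRE (payoff phi theta) tau mu nu ->
  Xmat phi mu nu *m theta = tau *: yvec mu nu.
Proof.
move=> tau0 [mus nus hmu hnu].
set Q := payoff phi theta.
have emu : forall mu', reg_obj Q tau mu' nu =
    \sum_a mu' a * (\sum_b Q a b * nu b) + tau * entropy mu' - tau * entropy nu.
  move=> mu'; rewrite /reg_obj; congr (_ + _ - _); apply: eq_bigr => a _.
  by rewrite mulr_sumr; apply: eq_bigr => b _; rewrite mulrA.
have enu : forall nu', reg_obj Q tau mu nu' =
    - (\sum_b nu' b * (- \sum_a mu a * Q a b) + tau * entropy nu') + tau * entropy mu.
  move=> nu'; rewrite /reg_obj exchange_big /=.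
  have -> : \sum_b nu' b * (- \sum_a mu a * Q a b) = - \sum_b \sum_a mu a * Q a b * nu' b.
    rewrite -sumrN; apply: eq_bigr => b _; rewrite mulrN mulr_sumr; congr (- _).
    by apply: eq_bigr => a _; rewrite mulrC.
  ring.
have gmu := @gibbs_ln R m (fun a => \sum_b Q a b * nu b) tau mu tau0 mus.
have gmu' : forall i j, tau * ln (mu i / mu j) =
    \sum_b Q i b * nu b - \sum_b Q j b * nu b.
  apply: gmu => mu' h'; move: (hmu mu' h'); rewrite !emu; by rewrite lerD2r.
have gnu := @gibbs_ln R n (fun b => - \sum_a mu a * Q a b) tau nu tau0 nus.
have gnu' : forall i j, tau * ln (nu i / nu j) =
    - \sum_a mu a * Q a i + \sum_a mu a * Q a j.
  move=> i j; rewrite gnu ?opprK //.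
  move=> nu' h'; move: (hnu nu' h'); rewrite !enu; by rewrite lerD2r lerN2.
rewrite /Xmat /yvec mul_col_mx scale_col_mx; congr col_mx; apply/matrixP => i j;
  rewrite !mxE ord1.
- rewrite gmu' -sumrB.
  under eq_bigr => k _ do rewrite mxE mulr_suml.
  rewrite exchange_big /=; apply: eq_bigr => b _.
  rewrite /Q /payoff !mulr_suml -sumrB; apply: eq_bigr => k _; ring.
- rewrite gnu' addrC -sumrB.
  under eq_bigr => k _ do rewrite mxE mulr_suml.
  rewrite exchange_big /=; apply: eq_bigr => a _.
  rewrite /Q /payoff !mulr_sumr -sumrB; apply: eq_bigr => k _; ring.
Qed.

Theorem theorem1 (R : realType) (m n d : nat)
  (phi : 'I_m -> 'I_n -> 'cV[R]_d) (L : R)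
  (hL : forall a b, norm2 (phi a b) <= L)
  (theta_s : 'cV[R]_d) (htheta : norm2 theta_s = 1)
  (tau_s : R) (htau : 0 < tau_s)
  (mu_s : 'I_m -> R) (nu_s : 'I_n -> R)
  (hQRE : is_QRE (payoff phi theta_s) tau_s mu_s nu_s) :
  (Xmat phi mu_s nu_s *m theta_s = tau_s *: yvec mu_s nu_s /\
   forall (theta : 'cV[R]_d) (tau : R), 0 < tau -> norm2 theta = 1 ->
     Xmat phi mu_s nu_s *m theta = tau *: yvec mu_s nu_s ->
     theta = theta_s /\ tau = tau_s)
  <->
  (\rank (Xmat phi mu_s nu_s) = d /\ yvec mu_s nu_s != 0).
Proof.
set X := Xmat phi mu_s nu_s; set y := yvec mu_s nu_s.
have hX : X *m theta_s = tau_s *: y by apply: qre_eq.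
have hts := (@norm2_1 R d theta_s).1 htheta.
split.
- move=> [_ uniq]; split; last first.
    apply/eqP => y0.
    have := uniq theta_s (tau_s *+ 2) (mulrn_wgt0 _ htau) htheta.
    case; first by rewrite hX y0 !scaler0.
    move=> _ /eqP.
    by rewrite mulr2n -subr_eq0 addrK gt_eqF.
  apply/eqP; rewrite eqn_leq rank_leq_col /=; apply/negP => /negP; rewrite -ltnNge => hr.
  have : kermx X^T != 0.
    by rewrite -mxrank_eq0 mxrank_ker mxrank_tr subn_eq0 -ltnNge.
  case/rowV0Pn => u /sub_kermxP uX u0.
  have [v vE] : exists v, v = u^T by exists u^T.
  have Xv : X *m v = 0 by rewrite vE -[X]trmxK -trmx_mul uX trmx0.
  set s := \sum_(k < d) theta_s k 0 * v k 0.
  set w := \sum_(k < d) v k 0 ^+ 2.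
  have w0 : 0 < w.
    rewrite lt_def sumr_ge0 ?andbT; last by move=> k _; exact: sqr_ge0.
    apply/eqP => w0; move/eqP: u0; apply; apply/matrixP => i j; rewrite !mxE ord1.
    have := @psumr_eq0P _ _ predT (fun k => v k 0 ^+ 2) (fun k _ => sqr_ge0 _) w0 j isT.
    by rewrite vE mxE => /eqP; rewrite sqrf_eq0 => /eqP.
  have [s0|s0] := eqVneq s 0.
    set r := Num.sqrt (1 + w).
    have r0 : 0 < r by rewrite sqrtr_gt0 ltr_wpDl.
    have := uniq (r^-1 *: (theta_s + v)) (tau_s / r) (divr_gt0 htau r0).
    case.
    + apply/norm2_1.
      under eq_bigr => k _ do rewrite !mxE exprMn.
      rewrite -mulr_sumr.
      have -> : \sum_(i < d) (theta_s i 0 + v i 0) ^+ 2 = 1 + w.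
        rewrite (eq_bigr (fun k => (theta_s k 0 + 1 * v k 0) ^+ 2));
          last by move=> k _; rewrite mul1r.
        rewrite sumsq_comb hts.
        rewrite (eq_bigr (fun k => theta_s k 0 * v k 0)) // -/s s0.
        rewrite (eq_bigr (fun k => v k 0 ^+ 2)) // -/w; ring.
      have r2 : r ^+ 2 = 1 + w by rewrite /r sqr_sqrtr // ltW // ltr_wpDl.
      by rewrite -r2 exprVn mulVf // gt_eqF // exprn_gt0.
    + by rewrite -scalemxAr mulmxDr hX Xv addr0 scalerA mulrC.
    move=> _ /eqP; rewrite -subr_eq0 -{2}(divr1 tau_s) -mulrBr mulf_eq0 gt_eqF //=.
    rewrite subr_eq0 => /eqP/invr_inj r1.
    have : r ^+ 2 = 1 + w by rewrite sqr_sqrtr // ltW // ltr_wpDl.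
    by rewrite r1 expr1n => h; lra.
  set c := - (2 * s) / w.
  have := uniq (theta_s + c *: v) tau_s htau.
  case.
  + apply/norm2_1.
    under eq_bigr => k _ do rewrite !mxE.
    rewrite sumsq_comb hts -/s -/w /c.
    by field; rewrite gt_eqF.
  + by rewrite mulmxDr -scalemxAr Xv scaler0 addr0.
  move=> /eqP; rewrite -subr_eq0 addrC addKr scaler_eq0 => /orP [c0 _|/eqP v0 _].
    by move: c0; rewrite /c mulf_eq0 invr_eq0 oppr_eq0 mulf_eq0 (gt_eqF w0) (negbTE s0) !orbF pnatr_eq0.
  by move/eqP: u0; apply; rewrite -[u]trmxK -vE v0 trmx0.
- move=> [rX _]; split => // theta tau tau0 hth hXt.
  have /row_fullP [B hB] : row_full X by rewrite /row_full rX.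
  have e : tau_s *: theta - tau *: theta_s = 0.
    rewrite -[_ - _]mul1mx -hB -mulmxA mulmxBr -!scalemxAr hXt hX !scalerA mulrC subrr.
    by rewrite mulmx0.
  have e' : tau_s *: theta = tau *: theta_s by apply/eqP; rewrite -subr_eq0 e.
  have htn := (@norm2_1 R d theta).1 hth.
  have tt : tau = tau_s.
    have : \sum_(k < d) (tau_s *: theta) k 0 ^+ 2 = \sum_(k < d) (tau *: theta_s) k 0 ^+ 2
      by rewrite e'.
    under eq_bigr => k _ do rewrite mxE exprMn.
    under [in RHS]eq_bigr => k _ do rewrite mxE exprMn.
    rewrite -!mulr_sumr htn hts !mulr1 => /eqP.
    by rewrite eqf_sqr => /orP [/eqP h|/eqP h]; lra.
  split => //; move: e'; rewrite tt => /eqP; rewrite -subr_eq0 -scalerBr scaler_eq0.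
  by rewrite (gt_eqF htau) subr_eq0 => /eqP.
Qed.
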